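(* Let $X$ be a real Banach space and $W,Y$ closed subspaces with $W\subseteq Y\subseteq X$. If $Y$ has property-$(HB)$ in $X$, then $Y/W$ has property-$(HB)$ in $X/W$.
   Context: For a closed subspace $V$ of a Banach space $E$, $V^\perp=\{e^*\in E^*:e^*|_V=0\}$. $V$ has property-$(HB)$ in $E$ if there is a linear projection $P$ on $E^*$ with range $V^\perp$ and $\|P\|=1$ such that, writing $G=(I-P)(E^* )$, for every $e^*=v^\#+v^\perp$ with $v^\#\in G$, $0\neq v^\perp\in V^\perp$, one has $\|e^*\|>\|v^\#\|$ and $\|e^*\|\ge\|v^\perp\|$. $Y/W$ is regarded as a subspace of $X/W$ with the quotient norm. *)

(* Defs.v *)
From HB Require Import structures.
From mathcomp Require Import all_boot all_order all_algebra.
From mathcomp Require Import all_classical all_reals all_analysis.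
Set Implicit Arguments. Unset Strict Implicit. Unset Printing Implicit Defensive.
Import Order.TTheory GRing.Theory Num.Theory.
Local Open Scope classical_set_scope.
Local Open Scope ring_scope.

Section HBDefs.
Variables (R : realType) (V : lmodType R).

Definition is_subspace (S : set V) : Prop :=
  S 0 /\ forall (a : R) x y, S x -> S y -> S (a *: x + y).

Definition is_linfun (f : V -> R) : Prop :=
  forall (a : R) x y, f (a *: x + y) = a * f x + f y.

Definition dual (N : V -> R) : set (V -> R) :=
  [set f | is_linfun f /\ exists C : R, forall x, `|f x| <= C * N x].

Definition dnorm (N : V -> R) (f : V -> R) : R :=
  sup [set `|f x| | x in [set x | N x <= 1]].

Definition perp (N : V -> R) (S : set V) : set (V -> R) :=
  [set f | dual N f /\ forall v, S v -> f v = 0].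

Definition opnorm (N : V -> R) (P : (V -> R) -> (V -> R)) : R :=
  sup [set dnorm N (P f) | f in [set f | dual N f /\ dnorm N f <= 1]].

Definition propHB (N : V -> R) (S : set V) : Prop :=
  exists P : (V -> R) -> (V -> R),
    [/\ (forall f, dual N f -> dual N (P f)),
        (forall (a : R) f g, dual N f -> dual N g ->
            P (fun x => a * f x + g x) = (fun x => a * P f x + P g x)),
        (forall f, dual N f -> P (P f) = P f),
        P @` (dual N) = perp N S &
        opnorm N P = 1] /\
        (let G := [set g | exists2 f, dual N f & g = (fun x => f x - P f x)] in
        forall g p, G g -> perp N S p -> p <> (fun _ => 0) ->
          dnorm N g < dnorm N (fun x => g x + p x) /\
          dnorm N p <= dnorm N (fun x => g x + p x)).
End HBDefs.

(* Quotient norm of X/W, viewed as a seminorm on X. *)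
Definition qnorm (R : realType) (X : normedModType R) (W : set X) (x : X) : R :=
  inf [set `|x - w| | w in W].

(* Main.v *)
Require Import Defs.
From HB Require Import structures.
From mathcomp Require Import all_boot all_order all_algebra.
From mathcomp Require Import all_classical all_reals all_analysis.
From mathcomp Require Import ring lra.
Import Order.TTheory GRing.Theory Num.Theory.
Local Open Scope classical_set_scope.
Local Open Scope ring_scope.
Set Implicit Arguments. Unset Strict Implicit.

Lemma lin0 (R : realType) (V : lmodType R) (f : V -> R) : is_linfun f -> f 0 = 0.
Proof.
move=> hf; have := hf 1 0 0; rewrite scale1r addr0 mul1r => /eqP.
by rewrite -subr_eq subrr eq_sym => /eqP.
Time Qed.

Lemma linZ (R : realType) (V : lmodType R) (f : V -> R) c z : is_linfun f -> f (c *: z) = c * f z.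
Proof. by move=> hf; have := hf c z 0; rewrite addr0 (lin0 hf) addr0. Qed.

Lemma linB (R : realType) (V : lmodType R) (f : V -> R) x w : is_linfun f -> f (x - w) = f x - f w.
Proof. by move=> hf; have := hf (-1) w x; rewrite scaleN1r addrC => ->; rewrite mulN1r addrC. Qed.

Lemma dual_ub (R : realType) (X : normedModType R) (f : X -> R) :
  dual (fun x : X => `|x|) f ->
  has_ubound [set `|f x| | x in [set x : X | `|x| <= 1]].
Proof.
case=> hf [C hC]; exists `|C| => _ [x /= hx <-].
apply: (le_trans (hC x)); apply: (le_trans (ler_norm _)).
rewrite normrM normr_id; apply: (le_trans (ler_wpM2l _ hx)) => //.
by rewrite mulr1.
Time Qed.

Lemma dnorm_ge0 (R : realType) (X : normedModType R) (f : X -> R) :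
  dual (fun x : X => `|x|) f -> 0 <= dnorm (fun x : X => `|x|) f.
Proof.
move=> hd; have := ub_le_sup (dual_ub hd); apply.
exists 0; rewrite /= ?normr0 //; by rewrite (lin0 hd.1) normr0.
Time Qed.

Lemma dual_bound (R : realType) (X : normedModType R) (f : X -> R) :
  dual (fun x : X => `|x|) f -> forall z, `|f z| <= dnorm (fun x : X => `|x|) f * `|z|.
Proof.
move=> hd z; have [->|z0] := eqVneq z 0.
  by rewrite (lin0 hd.1) !normr0 mulr0.
have nz : 0 < `|z| by rewrite normr_gt0.
have : `|f (`|z|^-1 *: z)| <= dnorm (fun x : X => `|x|) f.
  apply: (ub_le_sup (dual_ub hd)); exists (`|z|^-1 *: z) => //=.
  by rewrite normrZ normrV ?unitfE ?gt_eqF // normr_id mulVf ?gt_eqF.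
rewrite (linZ _ _ hd.1) normrM normrV ?unitfE ?gt_eqF // normr_id.
by rewrite ler_pdivrMl // mulrC.
Time Qed.

Lemma qnorm_lb (R : realType) (X : normedModType R) (W : set X) x :
  has_lbound [set `|x - w| | w in W].
Proof. by exists 0 => _ [w _ <-]. Qed.

Lemma qnorm_le (R : realType) (X : normedModType R) (W : set X) x w :
  W w -> qnorm W x <= `|x - w|.
Proof. by move=> Ww; apply: (ge_inf (qnorm_lb W x)); exists w. Qed.

Lemma qnorm_ge0 (R : realType) (X : normedModType R) (W : set X) x :
  W 0 -> 0 <= qnorm W x.
Proof. by move=> W0; apply: lb_le_inf; [exists `|x - 0|, 0| move=> _ [w _ <-]]. Qed.

Lemma qnorm_W (R : realType) (X : normedModType R) (W : set X) w :
  W 0 -> W w -> qnorm W w = 0.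
Proof.
move=> W0 Ww; apply/eqP; rewrite eq_le qnorm_ge0 // andbT.
by have := qnorm_le w Ww; rewrite subrr normr0.
Time Qed.

Lemma Qb (R : realType) (X : normedModType R) (W : set X) (f : X -> R) :
  W 0 -> dual (fun x : X => `|x|) f -> (forall w, W w -> f w = 0) ->
  forall x, `|f x| <= dnorm (fun x : X => `|x|) f * qnorm W x.
Proof.
move=> W0 hd hW x.
have key : forall w, W w -> `|f x| <= dnorm (fun x : X => `|x|) f * `|x - w|.
  by move=> w Ww; rewrite -[f x]subr0 -(hW w Ww) -(linB _ _ hd.1); exact: dual_bound.
have := dnorm_ge0 hd; rewrite le_eqVlt => /orP[/eqP d0|dpos].
  by have := key 0 W0; rewrite -d0 !mul0r.
rewrite mulrC -ler_pdivrMr //; apply: lb_le_inf; first by exists `|x - 0|, 0.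
by move=> _ [w Ww <-]; rewrite ler_pdivrMr // mulrC; exact: key.
Time Qed.

Lemma dualq_iff (R : realType) (X : normedModType R) (W : set X) (f : X -> R) :
  W 0 -> dual (qnorm W) f <-> dual (fun x : X => `|x|) f /\ (forall w, W w -> f w = 0).
Proof.
move=> W0; split.
  case=> hf [C hC]; split.
    split => //; exists `|C| => x; apply: (le_trans (hC x)).
    apply: (le_trans (ler_wpM2r (qnorm_ge0 x W0) (ler_norm C))).
    apply: ler_wpM2l => //; have := qnorm_le x W0; by rewrite subr0.
  move=> w Ww; apply/eqP; rewrite -normr_le0; apply: (le_trans (hC w)).
  by rewrite qnorm_W // mulr0.
case=> hd hW; split; first exact: hd.1.
by exists (dnorm (fun x : X => `|x|) f); exact: Qb.
Time Qed.

Lemma dnormq (R : realType) (X : normedModType R) (W : set X) (f : X -> R) :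
  W 0 -> dual (fun x : X => `|x|) f -> (forall w, W w -> f w = 0) ->
  dnorm (qnorm W) f = dnorm (fun x : X => `|x|) f.
Proof.
move=> W0 hd hW.
have ub : ubound [set `|f x| | x in [set x | qnorm W x <= 1]] (dnorm (fun x : X => `|x|) f).
  move=> _ [x /= hx <-]; apply: (le_trans (Qb W0 hd hW x)).
  by rewrite -[X in _ <= X]mulr1; apply: ler_wpM2l => //; exact: dnorm_ge0.
apply/eqP; rewrite eq_le; apply/andP; split.
  by apply: ge_sup => //; exists `|f 0|, 0 => //=; rewrite qnorm_W.
apply: ge_sup; first by exists `|f 0|, 0 => //=; rewrite normr0.
move=> _ [x /= hx <-]; apply: (ub_le_sup (ex_intro _ _ ub)); exists x => //=.
by apply: le_trans hx; have := qnorm_le x W0; rewrite subr0.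
Time Qed.

Lemma dual_comb (R : realType) (V : lmodType R) (N : V -> R) (f g : V -> R) a :
  dual N f -> dual N g -> dual N (fun x => a * f x + g x).
Proof.
case=> hf [C hC] [hg [D hD]]; split.
  move=> b x y; rewrite hf hg; ring.
exists (`|a| * C + D) => x; rewrite mulrDl.
apply: (le_trans (ler_normD _ _)); apply: lerD => //.
by rewrite normrM -mulrA; apply: ler_wpM2l.
Time Qed.

Lemma dnorm_scale (R : realType) (X : normedModType R) (f : X -> R) c :
  dual (fun x : X => `|x|) f -> 0 <= c ->
  dnorm (fun x : X => `|x|) (fun x => c * f x) <= c * dnorm (fun x : X => `|x|) f.
Proof.
move=> hd c0; apply: ge_sup; first by exists `|c * f 0|, 0 => //=; rewrite normr0.
move=> _ [x /= hx <-]; rewrite normrM ger0_norm //; apply: ler_wpM2l => //.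
apply: (le_trans (dual_bound hd x)).
by rewrite -[X in _ <= X]mulr1; apply: ler_wpM2l => //; exact: dnorm_ge0.
Time Qed.

Lemma dnormq' (R : realType) (X : normedModType R) (W : set X) (f : X -> R) :
  W 0 -> dual (qnorm W) f -> dnorm (qnorm W) f = dnorm (fun x : X => `|x|) f.
Proof. by move=> W0 /(dualq_iff _ W0) [hd hW]; exact: dnormq. Qed.

Lemma dual0 (R : realType) (V : lmodType R) (N : V -> R) :
  dual N (fun _ => 0).
Proof. by split; [move=> *; rewrite mulr0 addr0 | exists 0 => x; rewrite normr0 mul0r]. Qed.

Unset Implicit Arguments.
Theorem theorem3p10 (R : realType) (X : completeNormedModType R)
  (W Y : set X)
  (hW : is_subspace W) (hWc : closed W)
  (hY : is_subspace Y) (hYc : closed Y)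
  (hWY : W `<=` Y) :
  propHB (fun x : X => `|x|) Y -> propHB (qnorm W) Y.
Proof.
case=> P [[hPd hPl hPi hPim hPn] hHB].
have W0 : W 0 := hW.1.
have perpX : forall f, dual (fun x : X => `|x|) f -> perp (fun x : X => `|x|) Y (P f).
  by move=> f hf; rewrite -hPim; exists f.
have DqD : forall f, dual (qnorm W) f -> dual (fun x : X => `|x|) f.
  by move=> f /(dualq_iff _ W0) [].
have PDq : forall f, dual (qnorm W) f -> dual (qnorm W) (P f).
  move=> f /DqD hf; apply/(dualq_iff _ W0); split; first exact: hPd.
  by move=> w Ww; apply: (perpX f hf).2; apply: hWY.
have Pfix : forall p, perp (fun x : X => `|x|) Y p -> P p = p.
  by move=> p; rewrite -hPim => -[f hf <-]; apply: hPi.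
have perpDq : forall p, perp (fun x : X => `|x|) Y p -> dual (qnorm W) p.
  move=> p [hp hpY]; apply/(dualq_iff _ W0); split => // w Ww; exact/hpY/hWY.
exists P; split; first split.
- exact: PDq.
- by move=> a f g /DqD hf /DqD hg; apply: hPl.
- by move=> f /DqD hf; apply: hPi.
- apply/seteqP; split.
    move=> _ [f hf <-]; split; first exact: PDq.
    exact: (perpX f (DqD f hf)).2.
  move=> p [hp hpY]; exists p => //; apply: Pfix; split => //; exact: DqD.
- move: hPn; rewrite /opnorm => hPn.
  set SX := [set dnorm _ (P f) | f in _] in hPn.
  have hsX : has_sup SX.
    apply: contrapT => /sup_out; rewrite hPn => /eqP; by rewrite oner_eq0.
  have ubX : forall f, dual (fun x : X => `|x|) f -> dnorm (fun x : X => `|x|) f <= 1 ->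
      dnorm (fun x : X => `|x|) (P f) <= 1.
    by move=> f hf hf1; rewrite -hPn; apply: (ub_le_sup hsX.2); exists f.
  have [f0 [hf0 [x0 hx0]]] : exists f0, dual (fun x : X => `|x|) f0 /\ exists x0, P f0 x0 != 0.
    apply: contrapT => hne.
    have : sup SX <= 0.
      apply: ge_sup; first exact: hsX.1.
      move=> _ [f [hf _] <-]; apply: ge_sup; first by exists `|P f 0|, 0 => //=; rewrite normr0.
      move=> _ [x _ <-]; rewrite normr_le0; apply/negPn/negP => hx.
      by apply: hne; exists f; split => //; exists x.
    by rewrite hPn ler10.
  set p := P f0.
  have hpX : perp (fun x : X => `|x|) Y p := perpX f0 hf0.
  set d := dnorm (fun x : X => `|x|) p.
  have dpos : 0 < d.
    have h := dual_bound hpX.1 x0.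
    have := dnorm_ge0 hpX.1; rewrite le_eqVlt => /orP[/eqP d0|//].
    have d0' : dnorm (fun x : X => `|x|) p = 0 := esym d0.
    by move: h; rewrite d0' mul0r normr_le0 (negbTE hx0).
  set p' := fun x => d^-1 * p x.
  have hp'X : perp (fun x : X => `|x|) Y p'.
    split; last by move=> v Yv; rewrite /p' hpX.2 // mulr0.
    have := dual_comb d^-1 hpX.1 (dual0 _).
    by have -> : (fun x => d^-1 * p x + 0) = p' by apply: funext => x; rewrite addr0.
  have hp'q := perpDq p' hp'X.
  have dp' : dnorm (fun x : X => `|x|) p' = 1.
    apply/eqP; rewrite eq_le; apply/andP; split.
      have h : d^-1 >= 0 by rewrite invr_ge0 ltW.
      have := dnorm_scale (c:=d^-1) hpX.1 h.
      by rewrite -/p -/d mulVf ?gt_eqF.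
    have h := dnorm_scale (c:=d) hp'X.1 (ltW dpos).
    have e : (fun x => d * p' x) = p by apply: funext => x; rewrite /p' mulrA mulfV ?gt_eqF ?mul1r.
    by rewrite e -/d -[X in X <= _]mulr1 ler_pM2l // in h.
  apply/eqP; rewrite eq_le; apply/andP; split.
    apply: ge_sup; first by exists (dnorm (qnorm W) (P p')), p'; split => //; rewrite (dnormq' W0) // dp'.
    move=> _ [f [hf hf1] <-]; rewrite (dnormq' W0 (PDq f hf)); apply: ubX; first exact: DqD.
    by rewrite -(dnormq' W0 hf).
  have ubq : has_ubound [set dnorm (qnorm W) (P f) | f in [set f | dual (qnorm W) f /\ dnorm (qnorm W) f <= 1]].
    exists 1 => _ [f [hf hf1] <-]; rewrite (dnormq' W0 (PDq f hf)); apply: ubX; first exact: DqD.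
    by rewrite -(dnormq' W0 hf).
  apply: (ub_le_sup ubq); exists p'.
    by split => //; rewrite (dnormq' W0) // dp'.
  by rewrite (Pfix p' hp'X) (dnormq' W0) // dp'.
- move=> G g p; rewrite /G => -[f hf ->] hp hp0.
  have hg : dual (qnorm W) (fun x => f x - P f x).
    have := dual_comb (-1) (PDq f hf) hf.
    by have -> : (fun x => -1 * P f x + f x) = (fun x => f x - P f x)
      by apply: funext => x; rewrite mulN1r addrC.
  have hgp : dual (qnorm W) (fun x => (f x - P f x) + p x).
    have := dual_comb (1) hg (hp.1).
    by have -> : (fun x => 1 * (f x - P f x) + p x) = (fun x => (f x - P f x) + p x)
      by apply: funext => x; rewrite mul1r.
  rewrite !(dnormq' W0) //; last exact: hp.1.
  have [hpX hpY] := hp.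
  apply: (hHB (fun x => f x - P f x) p) => //.
    by exists f => //; exact: DqD.
  by split => //; exact: DqD.
Time Qed.
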